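(* Let $R$ be a commutative ring and let $0\to A\xrightarrow{f}B\xrightarrow{g}C\to 0$ be an exact sequence of $R$-modules. This sequence is $w$-split if and only if there exist $J=\langle d_1,\dots,d_n\rangle\in\mathrm{GV}(R)$ and $q_1,\dots,q_n\in\mathrm{Hom}_R(B,A)$ such that $q_kf=\eta^A_{d_k}$ for all $k=1,\dots,n$. Moreover, suppose $J=\langle d_1,\dots,d_n\rangle\in\mathrm{GV}(R)$ and $h_1,\dots,h_n\in\mathrm{Hom}_R(C,B)$ satisfy $gh_k=\eta^C_{d_k}$ for all $k$. Then there exist $q_k\in\mathrm{Hom}_R(B,A)$ with $q_kf=\eta^A_{d_k}$ and $\eta^B_{d_k}=fq_k+h_kg$ for each $k$.
   Context: $R$ is a commutative ring with identity. For an $R$-module $M$ and $s\in R$, $\eta^M_s:M\to M$ is multiplication by $s$. An ideal $J$ of $R$ is a GV-ideal if $J$ is finitely generated and the natural map $R\to\mathrm{Hom}_R(J,R)$ is an isomorphism; $\mathrm{GV}(R)$ is the set of GV-ideals. A short exact sequence $0\to A\xrightarrow{f}B\xrightarrow{g}C\to 0$ is $w$-split if there exist $J=\langle d_1,\dots,d_n\rangle\in\mathrm{GV}(R)$ and $h_1,\dots,h_n\in\mathrm{Hom}_R(C,B)$ with $gh_k=\eta^C_{d_k}$ for all $k$. *)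

(* Defs.v *)
From HB Require Import structures.
From mathcomp Require Import all_boot all_algebra.
Set Implicit Arguments. Unset Strict Implicit. Unset Printing Implicit Defensive.
Import GRing.Theory.
Local Open Scope ring_scope.

(* Commutative ring with identity: comPzRingType (the zero ring is allowed). *)

Definition eta_mul {R : comPzRingType} (M : lmodType R) (s : R) : M -> M :=
  fun x => s *: x.
Arguments eta_mul {R} M s _.

Definition in_ideal (R : comPzRingType) (n : nat) (d : 'I_n -> R) (x : R) : Prop :=
  exists c : 'I_n -> R, x = \sum_(i < n) c i * d i.

(* phi : J -> R is R-linear (an element of Hom_R(J,R)), phi given as a
   function R -> R whose values outside J are irrelevant *)
Definition ideal_hom (R : comPzRingType) (n : nat) (d : 'I_n -> R) (phi : R -> R) : Prop :=
  (forall x y, in_ideal d x -> in_ideal d y -> phi (x + y) = phi x + phi y) /\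
  (forall a x, in_ideal d x -> phi (a * x) = a * phi x).

(* J = <d_1,...,d_n> is a GV-ideal: J is finitely generated (by d) and the natural
   map R -> Hom_R(J,R), r |-> (x |-> r x), is injective and surjective. *)
Definition GV_ideal (R : comPzRingType) (n : nat) (d : 'I_n -> R) : Prop :=
  (forall r : R, (forall x, in_ideal d x -> r * x = 0) -> r = 0) /\
  (forall phi : R -> R, ideal_hom d phi ->
     exists r : R, forall x, in_ideal d x -> phi x = r * x).

Definition short_exact (R : comPzRingType) (A B C : lmodType R)
  (f : {linear A -> B}) (g : {linear B -> C}) : Prop :=
  injective f /\ (forall c : C, exists b : B, g b = c) /\
  (forall b : B, g b = 0 <-> exists a : A, b = f a).

Definition w_split (R : comPzRingType) (A B C : lmodType R)
  (f : {linear A -> B}) (g : {linear B -> C}) : Prop :=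
  exists (n : nat) (d : 'I_n -> R), GV_ideal d /\
    exists h : 'I_n -> {linear C -> B},
      forall k, (fun c => g (h k c)) =1 eta_mul C (d k).

(* Main.v *)
Require Import Defs.
From HB Require Import structures.
From mathcomp Require Import all_boot all_algebra.
From Stdlib Require Import ClassicalEpsilon.
Import GRing.Theory.
Local Open Scope ring_scope.

Definition mkLin {R : comPzRingType} {U V : lmodType R} {F : U -> V} (H : linear F) : {linear U -> V} :=
  HB.pack F (GRing.isLinear.Build R U V *:%R F H).

Lemma mkLinE {R : comPzRingType} {U V : lmodType R} (F : U -> V) (H : linear F) x :
  mkLin H x = F x.
Proof. by []. Qed.

Section S.
Variables (R : comPzRingType) (A B C : lmodType R)
  (f : {linear A -> B}) (g : {linear B -> C}).
Hypothesis ex : short_exact f g.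

Lemma gf a : g (f a) = 0.
Proof. by case: ex => _ [_ H]; apply/H; exists a. Qed.

Lemma part_b (s : R) (h : {linear C -> B}) :
  (forall c, g (h c) = s *: c) ->
  {q : {linear B -> A} | forall a b, q (f a) = s *: a /\ s *: b = f (q b) + h (g b)}.
Proof.
move=> gh.
case: ex => finj [_ ker].
have E : forall b, exists a, s *: b - h (g b) = f a.
  move=> b; apply/ker; by rewrite linearB /= linearZ /= gh subrr.
pose F b := proj1_sig (constructive_indefinite_description _ (E b)).
have FE b : f (F b) = s *: b - h (g b).
  by rewrite /F; case: constructive_indefinite_description.
have Flin : linear F.
  move=> a u v; apply: finj.
  by rewrite linearP /= !FE !(linearP g) /= !(linearP h) /= scalerDr (scalerBr a) !scalerA mulrC opprD addrACA.
exists (mkLin Flin) => a b; rewrite !mkLinE; split.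
  by apply: finj; rewrite FE gf linear0 subr0 linearZ.
by rewrite FE subrK.
Qed.

Lemma part_a (s : R) (q : {linear B -> A}) :
  (forall a, q (f a) = s *: a) ->
  {h : {linear C -> B} | forall c, g (h c) = s *: c}.
Proof.
move=> qf.
case: ex => finj [gsurj ker].
pose b_ c := proj1_sig (constructive_indefinite_description _ (gsurj c)).
have bE c : g (b_ c) = c by rewrite /b_; case: constructive_indefinite_description.
pose H c := s *: b_ c - f (q (b_ c)).
have HE c b : g b = c -> H c = s *: b - f (q b).
  move=> gb; rewrite /H.
  have [a ha] : exists a, b_ c - b = f a by apply/ker; rewrite linearB /= bE gb subrr.
  apply/eqP; rewrite -subr_eq0 opprB.
  have -> : s *: b_ c - f (q (b_ c)) + (f (q b) - s *: b) = s *: (b_ c - b) - f (q (b_ c - b)).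
    by rewrite !linearB /= opprK [RHS]addrACA [- (s *: b) + _]addrC.
  by rewrite ha qf linearZ subrr.
have Hlin : linear H.
  move=> a u v.
  rewrite (HE (a *: u + v) (a *: b_ u + b_ v)); last by rewrite linearP /= !bE.
  by rewrite /H !(linearP q) /= !(linearP f) /= scalerDr (scalerBr a) !scalerA mulrC opprD addrACA.
exists (mkLin Hlin) => c; rewrite mkLinE /H linearB /= linearZ /= bE gf subr0.
by [].
Qed.
End S.
Arguments part_b {R A B C f g} ex {s h}.
Arguments part_a {R A B C f g} ex {s q}.

Theorem proposition2p3 (R : comPzRingType) (A B C : lmodType R)
  (f : {linear A -> B}) (g : {linear B -> C}) :
  short_exact f g ->
  (w_split f g <->
     exists (n : nat) (d : 'I_n -> R), GV_ideal d /\
       exists q : 'I_n -> {linear B -> A},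
         forall k, (fun a => q k (f a)) =1 eta_mul A (d k)) /\
  (forall (n : nat) (d : 'I_n -> R), GV_ideal d ->
     forall h : 'I_n -> {linear C -> B},
       (forall k, (fun c => g (h k c)) =1 eta_mul C (d k)) ->
       exists q : 'I_n -> {linear B -> A},
         forall k, (fun a => q k (f a)) =1 eta_mul A (d k) /\
                   eta_mul B (d k) =1 (fun b => f (q k b) + h k (g b))).
Proof.
move=> ex; split; last first.
  move=> n d _ h hh.
  exists (fun k => proj1_sig (part_b ex (hh k))) => k.
  case: (part_b ex (hh k)) => q /= Hq; split => x.
    by case: (Hq x 0).
  by case: (Hq 0 x).
split.
  move=> [n [d [GV [h hh]]]]; exists n, d; split => //.
  exists (fun k => proj1_sig (part_b ex (hh k))) => k.
  case: (part_b ex (hh k)) => q /= Hq x.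
  by case: (Hq x 0).
move=> [n [d [GV [q hq]]]]; exists n, d; split => //.
exists (fun k => proj1_sig (part_a ex (hq k))) => k.
by case: (part_a ex (hq k)).
Qed.
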